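(* Fix $\alpha>0$. For $0<t\le1$ and $\mu\ge1$ define $$k_t(\mu)=\frac{(1+t\mu)^{2\alpha}\ln\left(1+\frac{t}{\mu}\right)+(\mu+t)^{2\alpha}\ln(1+t\mu)}{(1+t\mu)^{2\alpha}+(\mu+t)^{2\alpha}}.$$ Then for every $t\in(0,1]$, $\inf_{\mu\ge1}k_t(\mu)=\ln(1+t)$. *)

(* Defs.v *)
From Stdlib Require Import Reals.
Open Scope R_scope.

(* k_t(mu) for fixed alpha; real powers via Rpower (bases are positive here). *)
Definition k (alpha t mu : R) : R :=
  (Rpower (1 + t * mu) (2 * alpha) * ln (1 + t / mu)
   + Rpower (mu + t) (2 * alpha) * ln (1 + t * mu))
  / (Rpower (1 + t * mu) (2 * alpha) + Rpower (mu + t) (2 * alpha)).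

Definition is_glb (E : R -> Prop) (m : R) : Prop :=
  (forall x, E x -> m <= x) /\ (forall b, (forall x, E x -> b <= x) -> b <= m).

(* Main.v *)
Require Import Defs.
From Stdlib Require Import Reals Lra.
Open Scope R_scope.

Lemma ln_le' x y : 0 < x -> x <= y -> ln x <= ln y.
Proof. intros Hx [H|H]. left; apply ln_increasing; auto. subst; lra. Qed.

Lemma exp_le' x y : x <= y -> exp x <= exp y.
Proof. intros [H|H]. left; apply exp_increasing; auto. subst; lra. Qed.

Theorem lemma2p4 (alpha : R) (halpha : 0 < alpha) (t : R) (ht0 : 0 < t) (ht1 : t <= 1) :
  is_glb (fun y => exists mu, 1 <= mu /\ y = k alpha t mu) (ln (1 + t)).
Proof.
  split.
  - intros y [mu [Hmu ->]]. unfold k.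
    set (A := Rpower (1 + t * mu) (2 * alpha)).
    set (B := Rpower (mu + t) (2 * alpha)).
    assert (HA : 0 < A) by (unfold A, Rpower; apply exp_pos).
    assert (HAB : A <= B).
    { unfold A, B, Rpower. apply exp_le'. apply Rmult_le_compat_l. lra.
      apply ln_le'. nra. nra. }
    assert (Ht1 : 0 < 1 + t) by lra.
    assert (Htm : 0 < 1 + t * mu) by nra.
    assert (Htd : 0 < 1 + t / mu).
    { assert (0 < t / mu) by (apply Rdiv_lt_0_compat; lra). lra. }
    assert (X0 : 0 <= ln (1 + t * mu) - ln (1 + t)).
    { assert (ln (1 + t) <= ln (1 + t * mu)) by (apply ln_le'; nra). lra. }
    assert (XY : ln (1 + t) - ln (1 + t / mu) <= ln (1 + t * mu) - ln (1 + t)).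
    { assert (ln ((1+t)*(1+t)) <= ln ((1 + t * mu) * (1 + t / mu))).
      { apply ln_le'. nra.
        assert (E : (1 + t * mu) * (1 + t / mu) = 1 + t*t + t * (mu + / mu)) by (field; lra).
        rewrite E.
        assert (mu + / mu >= 2).
        { assert (mu + / mu - 2 = (mu - 1) * (mu - 1) / mu) by (field; lra).
          assert (0 <= (mu - 1) * (mu - 1) / mu).
          { apply Rmult_le_pos. nra. left; apply Rinv_0_lt_compat; lra. }
          lra. }
        nra. }
      rewrite !ln_mult in H by lra. lra. }
    apply Rmult_le_reg_r with (A + B). lra.
    unfold Rdiv. rewrite Rmult_assoc, Rinv_l, Rmult_1_r by lra.
    assert (A * (ln (1 + t) - ln (1 + t / mu)) <= A * (ln (1 + t * mu) - ln (1 + t)))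
      by (apply Rmult_le_compat_l; lra).
    assert (A * (ln (1 + t * mu) - ln (1 + t)) <= B * (ln (1 + t * mu) - ln (1 + t)))
      by (apply Rmult_le_compat_r; lra).
    unfold Rdiv in *. lra.
  - intros b Hb. specialize (Hb (k alpha t 1)).
    assert (E : k alpha t 1 = ln (1 + t)).
    { unfold k. replace (t * 1) with t by ring. replace (t / 1) with t by field.
      replace (1 + t) with (1 + t) by ring.
      assert (0 < Rpower (1 + t) (2 * alpha)) by (unfold Rpower; apply exp_pos).
      field. lra. }
    rewrite <- E. apply Hb. exists 1. split; lra.
Qed.
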